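(* Let $\mathcal G$ be a CFG and $\sigma$ a state of $\mathcal G$ with $\Pr_{term}(\mathcal G(\sigma))>0$. Then there is $N\in\mathbb N$ such that for every scheduler $\mathfrak s$ there exists a finite path of length at most $N$ that starts at $\sigma$, ends at the terminal state $\sigma_\bot$, and is consistent with $\mathfrak s$. In other words, the length of the shortest terminating finite path from $\sigma$ consistent with $\mathfrak s$ is bounded uniformly over all schedulers $\mathfrak s$.
   Context: A probabilistic control flow graph (CFG) is a tuple $\mathcal G=(L,V,l_{init},\mathbf x_{init},\mapsto,G,\mathsf{Pr},\mathsf{Upd})$. Here $L$ is a finite set of locations, partitioned into assignment, nondeterministic and probabilistic locations. $V=\{x_1,\dots,x_n\}$ is a finite set of variables ranging over $\mathbb Q$. $l_{init}\in L$ and $\mathbf x_{init}\in\mathbb Q^V$. $\mapsto\subseteq L\times L$ is a finite set of transitions. $G$ assigns to each transition a Boolean guard, namely a Boolean combination of arithmetic atomic formulas over the variables. $\mathsf{Pr}$ assigns to each transition leaving a probabilistic location a rational arithmetic expression over $V$; at every valuation each of these values is $>0$, and the values of the enabled outgoing transitions sum to $1$. $\mathsf{Upd}$ assigns to each transition leaving an assignment location an update $(j,u)$, with $u$ an arithmetic expression; assignment locations have at most one outgoing transition. A state is a pair $(l,\mathbf x)$. A transition $(l,l')$ is enabled at $(l,\mathbf x)$ if its guard holds there; in that case $(l',\mathbf x')$ is a successor, where $\mathbf x'=\mathbf x$, except that for an assignment location $\mathbf x'[j]=u(\mathbf x)$. Every state has at least one, and hence finitely many, successors. A finite path is a sequence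 of states in which each state is a successor of the previous one. A run is an infinite such sequence starting at the initial state. A scheduler $\mathfrak s$ maps each finite path ending at a nondeterministic state to a successor of that state; no measurability restriction is imposed. A path is consistent with $\mathfrak s$ if every nondeterministic step in it follows $\mathfrak s$. Each scheduler $\mathfrak s$ induces a probability measure $\mathbb P_{\mathfrak s}$ on runs, generated by cylinder sets: probabilistic states move to successors with probabilities given by $\mathsf{Pr}$, and nondeterministic choices follow $\mathfrak s$. $\mathcal G(\sigma)$ denotes $\mathcal G$ with initial state $\sigma$. There is a distinguished terminal state $\sigma_\bot=(l_{out},\mathbf 0)$. The termination probability is $\Pr_{term}(\mathcal G)=\inf_{\mathfrak s}\mathbb P_{\mathfrak s}[\Diamond\sigma_\bot]$, where $\Diamond\sigma_\bot$ is the set of runs that visit $\sigma_\bot$. *)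

(* Defs.v *)
From mathcomp Require Import all_boot all_order all_algebra.
From mathcomp Require Import classical_sets reals constructive_ereal ereal.
Set Implicit Arguments. Unset Strict Implicit. Unset Printing Implicit Defensive.
Import Order.TTheory GRing.Theory Num.Theory.
Local Open Scope ring_scope.

Definition valuation (nv : nat) := {ffun 'I_nv -> rat}.

Inductive aexpr (nv : nat) :=
| AConst of rat
| AVar of 'I_nv
| AAdd of aexpr nv & aexpr nv
| ASub of aexpr nv & aexpr nv
| AMul of aexpr nv & aexpr nv
| ADiv of aexpr nv & aexpr nv.

Fixpoint aeval nv (e : aexpr nv) (x : valuation nv) : rat :=
  match e with
  | AConst q => q
  | AVar i => x i
  | AAdd a b => aeval a x + aeval b x
  | ASub a b => aeval a x - aeval b x
  | AMul a b => aeval a x * aeval b x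
  | ADiv a b => aeval a x / aeval b x
  end.

Inductive bexpr (nv : nat) :=
| BTrue
| BLe of aexpr nv & aexpr nv
| BLt of aexpr nv & aexpr nv
| BEq of aexpr nv & aexpr nv
| BNot of bexpr nv
| BAnd of bexpr nv & bexpr nv
| BOr of bexpr nv & bexpr nv.

Fixpoint beval nv (b : bexpr nv) (x : valuation nv) : bool :=
  match b with
  | BTrue => true
  | BLe a c => aeval a x <= aeval c x
  | BLt a c => aeval a x < aeval c x
  | BEq a c => aeval a x == aeval c x
  | BNot b => ~~ beval b x
  | BAnd b c => beval b x && beval c x
  | BOr b c => beval b x || beval c x
  end.

Inductive loc_kind := KAssign | KNondet | KProb.

(* A probabilistic CFG (L, V, l_init, x_init, |->, G, Pr, Upd), together with
   the distinguished terminal location l_out. *)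
Record cfg (nv : nat) := CFG {
  L : finType;
  kind : L -> loc_kind;          (* partition of L *)
  l_init : L;
  x_init : valuation nv;
  trans : rel L;
  guard : L -> L -> bexpr nv;
  prob : L -> L -> aexpr nv;     (* used on transitions out of prob. locations *)
  upd : L -> L -> 'I_nv * aexpr nv; (* used on transitions out of assignment locations *)
  l_out : L
}.
Arguments L {nv} c.
Arguments kind {nv} c _.
Arguments trans {nv} c _ _.
Arguments guard {nv} c _ _.
Arguments prob {nv} c _ _.
Arguments upd {nv} c _ _.
Arguments l_out {nv} c.

Section CFGSem.
Variables (nv : nat) (G : cfg nv).

Definition state := (L G * valuation nv)%type.

Definition enabled (l l' : L G) (x : valuation nv) : bool :=
  trans G l l' && beval (guard G l l') x.

Definition upd_val (ju : 'I_nv * aexpr nv) (x : valuation nv) : valuation nv :=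
  [ffun k => if k == ju.1 then aeval ju.2 x else x k].

Definition succ (s s' : state) : bool :=
  enabled s.1 s'.1 s.2 &&
  (s'.2 == if kind G s.1 is KAssign then upd_val (upd G s.1 s'.1) s.2 else s.2).

Definition wf_cfg : Prop :=
  [/\ (forall l l' x, kind G l = KProb -> trans G l l' -> 0 < aeval (prob G l l') x),
      (forall l x, kind G l = KProb ->
         \sum_(l' | enabled l l' x) aeval (prob G l l') x = 1),
      (forall l l1 l2, kind G l = KAssign -> trans G l l1 -> trans G l l2 -> l1 = l2)
    & (forall s : state, exists s' : state, succ s s')].

Definition sigma_bot : state := (l_out G, [ffun => 0]).

Definition is_nondet (s : state) : bool := if kind G s.1 is KNondet then true else false.

Definition fpath_from (sigma : state) (p : seq state) : Prop :=
  exists q, p = sigma :: q /\ path succ sigma q.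

Record scheduler (sigma : state) := Scheduler {
  sched :> seq state -> state;
  schedP : forall q, path succ sigma q -> is_nondet (last sigma q) ->
             succ (last sigma q) (sched (sigma :: q))
}.

Definition consistent (sigma : state) (s : scheduler sigma) (p : seq state) :=
  forall i, (i.+1 < size p)%N -> is_nondet (nth sigma p i) ->
    nth sigma p i.+1 = s (take i.+1 p).

(* Probability, under s, of visiting sigma_bot within n further steps,
   given the history h (previous states) and current state c. *)
Fixpoint reach (sigma : state) (s : scheduler sigma) (n : nat)
    (h : seq state) (c : state) : rat :=
  if c == sigma_bot then 1 else
  match n with
  | 0 => 0
  | n'.+1 =>
    match kind G c.1 with
    | KNondet => reach s n' (rcons h c) (s (rcons h c))
    | KProb => \sum_(l' | enabled c.1 l' c.2)
                 aeval (prob G c.1 l') c.2 * reach s n' (rcons h c) (l', c.2)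
    | KAssign => \sum_(l' | enabled c.1 l' c.2)
                 reach s n' (rcons h c) (l', upd_val (upd G c.1 l') c.2)
    end
  end.

Local Open Scope ereal_scope.

(* P_s[<> sigma_bot] in G(sigma): measure of the increasing union of the
   events "sigma_bot visited within n steps" *)
Definition prob_reach (R : realType) (sigma : state) (s : scheduler sigma)
  : \bar R :=
  ereal_sup (range (fun n => (ratr (reach s n [::] sigma) : R)%:E)).

Definition Pr_term (R : realType) (sigma : state) : \bar R :=
  ereal_inf (range (fun s : scheduler sigma => prob_reach R s)).

End CFGSem.

(* Main.v *)
Require Import Defs.
From mathcomp Require Import all_boot all_order all_algebra.
From mathcomp Require Import classical_sets reals constructive_ereal ereal.
From mathcomp Require Import boolp.
Set Implicit Arguments. Unset Strict Implicit.
Import Order.TTheory GRing.Theory Num.Theory.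
Local Open Scope ring_scope.

Fixpoint bad {nv} {G : cfg nv} (n : nat) (c : state G) : Prop :=
  match n with
  | 0 => c <> sigma_bot G
  | n'.+1 => c <> sigma_bot G /\
      (if is_nondet c then exists c', succ c c' /\ bad n' c'
       else forall c', succ c c' -> bad n' c')
  end.

Lemma bad_ne nv (G : cfg nv) n (c : state G) : bad n c -> c <> sigma_bot G.
Proof. by case: n => [|n] /=; [|case]. Qed.

Lemma bad_mono nv (G : cfg nv) n : forall (c : state G), bad n.+1 c -> bad n c.
Proof.
elim: n => [|n IH] c /=; first by case.
case=> hne H; split => //.
case: (is_nondet c) H => [[c' [sc bc]]|H].
  by exists c'; split => //; apply: IH.
by move=> c' sc; apply: IH; apply: H.
Qed.

Lemma bad_le nv (G : cfg nv) m n (c : state G) : (m <= n)%N -> bad n c -> bad m c.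
Proof.
move=> /subnK <-; elim: (n - m)%N => [|k IH] //= h.
by apply: IH; apply: bad_mono.
Qed.

Lemma consistent_rcons nv (G : cfg nv) (sigma : state G) (s : scheduler sigma) q c' :
  consistent s (sigma :: q) ->
  (is_nondet (last sigma q) -> c' = s (sigma :: q)) ->
  consistent s (sigma :: rcons q c').
Proof.
move=> hc hn i; rewrite -rcons_cons size_rcons ltnS leq_eqVlt => /orP [/eqP Ei|lt].
  have NL : nth sigma (sigma :: q) (size q) = last sigma q.
    by have := nth_last sigma (sigma :: q).
  move: Ei => [->]; rewrite !nth_rcons /= ltnSn ltnn eqxx NL => /hn ->.
  by rewrite -cats1 takel_cat // take_size.
rewrite !nth_rcons (ltn_trans (ltnSn _) lt) lt => H.
rewrite -cats1 takel_cat ?(ltnW lt) //; exact: hc.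
Qed.

Lemma ext nv (G : cfg nv) (sigma : state G) (s : scheduler sigma) (n : nat) :
  forall q : seq (state G), path (@succ _ G) sigma q -> consistent s (sigma :: q) ->
  ~ bad n (last sigma q) ->
  exists q', [/\ path (@succ _ G) sigma q', consistent s (sigma :: q'),
     last sigma q' = sigma_bot G & (size q' <= size q + n)%N].
Proof.
elim: n => [|n IH] q hp hc /=.
  by move=> /contrapT E; exists q; rewrite addn0.
have [E|NE] := eqVneq (last sigma q) (sigma_bot G).
  by move=> _; exists q; split => //; rewrite leq_addr.
move=> nb.
have [c' [sc nb' nd]] : exists c', [/\ succ (last sigma q) c', ~ bad n c' &
    (is_nondet (last sigma q) -> c' = s (sigma :: q))].
  case ND: (is_nondet (last sigma q)) nb => nb.
    exists (s (sigma :: q)); split => //; first exact: schedP.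
    move=> b; apply: nb; split; first exact/eqP.
    by exists (s (sigma :: q)); split => //; exact: schedP.
  apply: contrapT => H; apply: nb; split; first exact/eqP.
  move=> c' sc; apply: contrapT => nb'; apply: H; exists c'; split => //.
have hp' : path (@succ _ G) sigma (rcons q c') by rewrite rcons_path hp.
have := IH _ hp' (consistent_rcons hc nd); rewrite last_rcons => /(_ nb') [q' [p1 p2 p3 p4]].
exists q'; split => //; by rewrite (leq_trans p4) // size_rcons addSnnS.
Qed.

Definition bad_inf nv (G : cfg nv) (c : state G) := forall n, bad n c.

Definition nxt nv (G : cfg nv) (c : state G) (l' : L G) : state G :=
  (l', if kind G c.1 is KAssign then upd_val (upd G c.1 l') c.2 else c.2).

Lemma succ_nxt nv (G : cfg nv) (c c' : state G) : succ c c' -> c' = nxt c c'.1.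
Proof. by case/andP => _ /eqP; case: c' => l x /= ->. Qed.

Lemma bad_inf_nondet nv (G : cfg nv) (c : state G) :
  bad_inf c -> is_nondet c -> exists c', succ c c' /\ bad_inf c'.
Proof.
move=> hb nd.
have [[l' Hl]|] := pselect (exists l', succ c (nxt c l') /\ bad_inf (nxt c l')).
  by exists (nxt c l').
move=> H.
have H2 : forall l', exists n, ~ (succ c (nxt c l') /\ bad n (nxt c l')).
  move=> l'; apply: contrapT => H3; apply: H; exists l'.
  have H4 : forall n, succ c (nxt c l') /\ bad n (nxt c l').
    by move=> n; apply: contrapT => H5; apply: H3; exists n.
  by split; [case: (H4 0%N)| move=> n; case: (H4 n)].
have [f hf] := choice H2.
pose M := (\max_(l' : L G) f l')%N.
have := hb M.+1 => /= [[_]]; rewrite nd => [[c' [sc bc]]].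
exfalso; apply: (hf c'.1); rewrite -(succ_nxt sc); split => //.
apply: bad_le bc; exact: (leq_bigmax_cond (P:=xpredT)).
Qed.

Lemma bad_inf_det nv (G : cfg nv) (c c' : state G) :
  bad_inf c -> ~~ is_nondet c -> succ c c' -> bad_inf c'.
Proof.
move=> hb nd sc n; have := hb n.+1 => /= [[_]].
by rewrite (negbTE nd) => /(_ c' sc).
Qed.

Lemma bad_inf_ne nv (G : cfg nv) (c : state G) : bad_inf c -> c <> sigma_bot G.
Proof. by move=> /(_ 0%N). Qed.

Theorem mainTheorem1 (R : realType) (nv : nat) (G : cfg nv)
    (wfG : wf_cfg G) (sigma : state G) :
  (0 < Pr_term R sigma)%E ->
  exists N : nat, forall s : scheduler sigma,
    exists p : seq (state G),
      [/\ fpath_from sigma p, last sigma p = sigma_bot G,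
          (size p <= N.+1)%N & consistent s p].
Proof.
move=> hpos; apply: contrapT => hno.
have bN : bad_inf sigma.
  move=> N; apply: contrapT => nb.
  apply: hno; exists N => s.
  have hc0 : consistent s [:: sigma] by move=> [|i].
  have [q' [p1 p2 p3 p4]] := ext (q:=[::]) (s:=s) (n:=N) isT hc0 nb.
  exists (sigma :: q'); split => //; by exists q'.
case: wfG => _ _ _ wsucc.
have Hf : forall c : state G, exists c', succ c c' /\ (is_nondet c -> bad_inf c -> bad_inf c').
  move=> c.
  have [[bc nd]|] := pselect (bad_inf c /\ is_nondet c).
    have [c' [sc bc']] := bad_inf_nondet bc nd.
    by exists c'; split.
  move=> H; have [c' sc] := wsucc c; exists c'; split => // nd bc.
  by exfalso; apply: H.
have [f hf] := choice Hf.
pose sch := fun p : seq (state G) => f (last sigma p).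
have schP : forall q, path (@succ _ G) sigma q -> is_nondet (last sigma q) ->
    succ (last sigma q) (sch (sigma :: q)).
  by move=> q _ _; rewrite /sch /=; case: (hf (last sigma q)).
pose s := Scheduler schP.
have r0 : forall n h c, bad_inf c -> reach s n h c = 0.
  elim=> [|n IH] h c bc /=.
    by have /eqP/negbTE -> := bad_inf_ne bc.
  have /eqP/negbTE -> := bad_inf_ne bc.
  case K: (kind G c.1).
  - rewrite big1 // => l' en; apply: IH; refine (bad_inf_det bc _ _).
      by rewrite /is_nondet K.
    by rewrite /succ en /= K.
  - rewrite /= /sch last_rcons; apply: IH.
    by case: (hf c) => _; apply => //; rewrite /is_nondet K.
  - rewrite big1 // => l' en; rewrite IH; first by rewrite mulr0.
    refine (bad_inf_det bc _ _).
      by rewrite /is_nondet K.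
    by rewrite /succ en /= K.
have : (Pr_term R sigma <= 0)%E.
  apply: (@le_trans _ _ (prob_reach R s)).
    by apply: ereal_inf_lbound; exists s.
  apply: ge_ereal_sup => _ [n _ <-].
  by rewrite r0 // rmorph0.
by rewrite leNgt hpos.
Qed.
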